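(* In the quantum group $U_q(\mathfrak{sl}_n(\mathbb{C}))$ (with $q\in\mathbb{C}^\times$, $q\neq\pm1$), the elements $E_{i,j}$ defined below satisfy $E_{i,i+1}=e_i$ and $E_{i+1,i}=f_i$ for $i=1,\dots,n-1$, and $E_{i,j}=E_{i,k}E_{k,j}-qE_{k,j}E_{i,k}$ for $1\le i<k<j\le n$, and $E_{i,j}=E_{i,k}E_{k,j}-q^{-1}E_{k,j}E_{i,k}$ for $n\ge i>k>j\ge 1$.
   Context: $U_q(\mathfrak{sl}_n(\mathbb{C}))$ is the unital associative $\mathbb{C}$-algebra generated by $e_i,f_i,k_i,k_i^{-1}$ ($1\le i\le n-1$) with relations $k_ik_i^{-1}=k_i^{-1}k_i=1$, $k_ik_j=k_jk_i$, $k_ie_jk_i^{-1}=q^{a_{ij}}e_j$, $k_if_jk_i^{-1}=q^{-a_{ij}}f_j$, $e_if_j-f_je_i=\delta_{ij}\frac{k_i-k_i^{-1}}{q-q^{-1}}$, and $e_i^2e_j-(q+q^{-1})e_ie_je_i+e_je_i^2=0$, $f_i^2f_j-(q+q^{-1})f_if_jf_i+f_jf_i^2=0$ for $|i-j|=1$, $e_ie_j=e_je_i$, $f_if_j=f_jf_i$ for $|i-j|>1$; here $a_{ii}=2$, $a_{ij}=-1$ if $|i-j|=1$, $a_{ij}=0$ if $|i-j|>1$. There are algebra automorphisms $T_1,\dots,T_{n-1}$ of $U_q(\mathfrak{sl}_n(\mathbb{C}))$ (satisfying the braid relations) determined by $T_i(e_i)=-f_ik_i^{-1}$, $T_i(k_i)=k_i^{-1}$,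 $T_i(f_i)=-k_ie_i$; for $|i-j|=1$: $T_i(e_j)=e_ie_j-qe_je_i$, $T_i(k_j)=k_ik_j$, $T_i(f_j)=f_jf_i-q^{-1}f_if_j$; for $|i-j|>1$: $T_i(e_j)=e_j$, $T_i(k_j)=k_j$, $T_i(f_j)=f_j$. For $1\le i<j\le n$ let $T_{w_{i,j}}=(T_1T_2\cdots T_{n-1})(T_1\cdots T_{n-2})\cdots(T_1\cdots T_{n-i+1})(T_1\cdots T_{j-i-1})$ (there are $i-1$ blocks of the form $T_1\cdots T_{n-l}$, $l=1,\dots,i-1$, followed by $T_1\cdots T_{j-i-1}$, which is empty when $j=i+1$), and define $E_{i,j}=T_{w_{i,j}}(e_{j-i})$ and $E_{j,i}=T_{w_{i,j}}(f_{j-i})$. *)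

(* Defs.v *)
From HB Require Import structures.
From mathcomp Require Import all_boot all_order all_algebra.
From mathcomp Require Import reals complex.
Set Implicit Arguments. Unset Strict Implicit. Unset Printing Implicit Defensive.
Import Order.TTheory GRing.Theory Num.Theory.
Local Open Scope ring_scope.

(* Generators are indexed by nat; only indices 1 <= i <= n-1 matter. *)

Definition cartan (i j : nat) : int :=
  if i == j then 2%:Z
  else if (i == j.+1) || (j == i.+1) then - 1%:Z else 0%:Z.

Definition adjacent (i j : nat) : bool := (i == j.+1) || (j == i.+1).
Definition distant (i j : nat) : bool := (i.+1 < j)%N || (j.+1 < i)%N.
Definition in_range (n i : nat) : bool := (1 <= i)%N && (i <= n.-1)%N.

Definition Uq_relations (F : fieldType) (A : algType F) (n : nat) (q : F)
    (e f k kinv : nat -> A) : Prop :=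
  forall i j, in_range n i -> in_range n j ->
  [/\ k i * kinv i = 1, kinv i * k i = 1 & k i * k j = k j * k i] /\
  [/\ k i * e j * kinv i = (q ^ cartan i j) *: e j,
      k i * f j * kinv i = (q ^ (- cartan i j)) *: f j,
      e i * f j - f j * e i =
        (if i == j then (q - q^-1)^-1 *: (k i - kinv i) else 0),
      (adjacent i j ->
        e i ^+ 2 * e j - (q + q^-1) *: (e i * e j * e i) + e j * e i ^+ 2 = 0
        /\ f i ^+ 2 * f j - (q + q^-1) *: (f i * f j * f i) + f j * f i ^+ 2 = 0)
    & (distant i j -> e i * e j = e j * e i /\ f i * f j = f j * f i)].

Definition Lusztig_T (F : fieldType) (A : algType F) (n : nat) (q : F)
    (e f k kinv : nat -> A) (T : nat -> {lrmorphism A -> A}) : Prop :=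
  forall i j, in_range n i -> in_range n j ->
  [/\ (i = j -> [/\ T i (e i) = - (f i * kinv i), T i (k i) = kinv i
                 & T i (f i) = - (k i * e i)]),
      (adjacent i j -> [/\ T i (e j) = e i * e j - q *: (e j * e i),
                          T i (k j) = k i * k j
                        & T i (f j) = f j * f i - q^-1 *: (f i * f j)])
    & (distant i j -> [/\ T i (e j) = e j, T i (k j) = k j & T i (f j) = f j])].

(* The reduced word of w_{i,j}:
   (T_1...T_{n-1})(T_1...T_{n-2})...(T_1...T_{n-i+1})(T_1...T_{j-i-1}). *)
Definition word_w (n i j : nat) : seq nat :=
  flatten [seq iota 1 (n - l) | l <- iota 1 (i - 1)] ++ iota 1 (j - i - 1).

Definition Tword (F : fieldType) (A : algType F) (T : nat -> {lrmorphism A -> A})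
    (w : seq nat) (x : A) : A :=
  foldr (fun a y => T a y) x w.

Definition Eroot (F : fieldType) (A : algType F) (n : nat)
    (e f : nat -> A) (T : nat -> {lrmorphism A -> A}) (i j : nat) : A :=
  if (i < j)%N then Tword T (word_w n i j) (e (j - i)%N)
  else Tword T (word_w n j i) (f (i - j)%N).

(* Main.v *)
Require Import Defs.
From HB Require Import structures.
From mathcomp Require Import all_boot all_order all_algebra.
From mathcomp Require Import reals complex.
From mathcomp Require Import ring zify.
Import Order.TTheory GRing.Theory Num.Theory.
Local Open Scope ring_scope.
Set Implicit Arguments. Unset Strict Implicit.

Definition qc (F : fieldType) (A : algType F) (c : F) (x y : A) : A := x * y - c *: (y * x).

Lemma swap4 (V : zmodType) (a b d e : V) : a - b - (d - e) = a - d - (b - e).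
Proof. by rewrite !opprB !addrA (addrAC a (-b)) (addrAC (a + e) (-b)) (addrAC a (-d)). Qed.

Lemma qc_jacobi (F : fieldType) (A : algType F) (c : F) (x y z : A) :
  x * z = z * x -> qc c (qc c x y) z = qc c x (qc c y z).
Proof.
move=> hxz; rewrite /qc !mulrBl !mulrBr -!scalerAl -!scalerAr !scalerBr !scalerA !mulrA.
rewrite -(mulrA y x z) hxz mulrA.
exact: swap4.
Qed.

Lemma qc_comm (F : fieldType) (A : algType F) (c : F) (x y z : A) :
  x * y = y * x -> x * z = z * x -> x * qc c y z = qc c y z * x.
Proof.
move=> hy hz; rewrite /qc mulrBl mulrBr -scalerAl -scalerAr.
have h1 : x * (y * z) = y * z * x by rewrite mulrA hy -mulrA hz mulrA.
have h2 : x * (z * y) = z * y * x by rewrite mulrA hz -mulrA hy mulrA.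
by rewrite h1 h2.
Qed.

Lemma cancel4 (V : zmodType) (a b d : V) : a - b - (d - b) = a - d.
Proof. by rewrite opprB addrA addrNK. Qed.

Lemma conjK (F : fieldType) (A : algType F) (K Ki E : A) (c : F) :
  K * Ki = 1 -> Ki * K = 1 -> K * E * Ki = c *: E -> c != 0 ->
  K * E = c *: (E * K) /\ Ki * E = c^-1 *: (E * Ki).
Proof.
move=> h1 h2 h3 hc; split.
  by rewrite -[K * E]mulr1 -h2 mulrA h3 scalerAl.
have : c *: (Ki * E) = E * Ki.
  by rewrite scalerAr -h3 !mulrA h2 mul1r.
by move<-; rewrite scalerA mulVf // scale1r.
Qed.

Lemma keyE (F : fieldType) (A : algType F) (q : F) (E1 E2 Fa K Ki : A) :
  q != 0 -> q * q - 1 != 0 -> K * Ki = 1 -> Ki * K = 1 ->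
  K * E2 = q^-1 *: (E2 * K) -> Ki * E2 = q *: (E2 * Ki) ->
  Ki * E1 = (q ^+ 2)^-1 *: (E1 * Ki) ->
  E1 * Fa - Fa * E1 = (q - q^-1)^-1 *: (K - Ki) -> E2 * Fa = Fa * E2 ->
  qc q (qc q E1 E2) (- (Fa * Ki)) = E2.
Proof.
move=> hq hq2 hKKi hKiK hKE2 hKiE2 hKiE1 hEF1 hEF2.
set X := qc q E1 E2.
have hX : X = E1 * E2 - q *: (E2 * E1) by [].
clearbody X.
have m1 : Ki * (E1 * E2) = q^-1 *: (E1 * E2 * Ki).
  rewrite mulrA hKiE1 -scalerAl -(mulrA E1 Ki E2) hKiE2 -scalerAr scalerA mulrA.
  by congr (_ *: _); field.
have m2 : Ki * (E2 * E1) = q^-1 *: (E2 * E1 * Ki).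
  rewrite mulrA hKiE2 -scalerAl -(mulrA E2 Ki E1) hKiE1 -scalerAr scalerA mulrA.
  by congr (_ *: _); field.
have s1 : Ki * X = q^-1 *: (X * Ki).
  rewrite hX mulrBr -scalerAr m1 m2 mulrBl -scalerAl scalerBr !scalerA.
  by rewrite mulrC.
have s2 : qc q X (- (Fa * Ki)) = (Fa * X - X * Fa) * Ki.
  rewrite /qc mulrN mulNr scalerN opprK -(mulrA Fa Ki X) s1 -scalerAr scalerA.
  rewrite mulfV // scale1r mulrBl !mulrA addrC.
  done.
have s3 : X * Fa - Fa * X = (E1 * Fa - Fa * E1) * E2 - q *: (E2 * (E1 * Fa - Fa * E1)).
  rewrite hX !mulrBl !mulrBr -!scalerAl -!scalerAr.
  rewrite !mulrA -(mulrA E1 E2 Fa) hEF2 !mulrA.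
  rewrite scalerBr. exact: swap4.
have s4 : (q - q^-1)^-1 *: (K - Ki) * E2 - q *: (E2 * ((q - q^-1)^-1 *: (K - Ki))) = - (E2 * K).
  rewrite -scalerAl -scalerAr mulrBl mulrBr hKE2 hKiE2 !scalerBr !scalerA.
  rewrite (mulrC q (q - q^-1)^-1) cancel4 -scalerBl -scaleN1r.
  by congr (_ *: _); field; rewrite hq hq2.
rewrite s2 -opprB s3 hEF1 s4 !mulNr opprK -mulrA hKKi mulr1.
done.
Qed.

Lemma cancel5 (V : zmodType) (a b d : V) : a - b - (a - d) = d - b.
Proof. by rewrite opprB addrC addrA addrNK. Qed.

Lemma keyF (F : fieldType) (A : algType F) (q : F) (E1 Fa Fb K Ki : A) :
  q != 0 -> q * q - 1 != 0 -> K * Ki = 1 -> Ki * K = 1 ->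
  K * Fa = (q ^+ 2)^-1 *: (Fa * K) -> K * Fb = q *: (Fb * K) ->
  Ki * Fb = q^-1 *: (Fb * Ki) ->
  E1 * Fa - Fa * E1 = (q - q^-1)^-1 *: (K - Ki) -> E1 * Fb = Fb * E1 ->
  qc q^-1 (- (K * E1)) (qc q^-1 Fb Fa) = Fb.
Proof.
move=> hq hq2 hKKi hKiK hKFa hKFb hKiFb hEF1 hEF2.
set Y := qc q^-1 Fb Fa.
have hY : Y = Fb * Fa - q^-1 *: (Fa * Fb) by [].
clearbody Y.
have m1 : K * (Fb * Fa) = q^-1 *: (Fb * Fa * K).
  rewrite mulrA hKFb -scalerAl -(mulrA Fb K Fa) hKFa -scalerAr scalerA mulrA.
  by congr (_ *: _); field.
have m2 : K * (Fa * Fb) = q^-1 *: (Fa * Fb * K).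
  rewrite mulrA hKFa -scalerAl -(mulrA Fa K Fb) hKFb -scalerAr scalerA mulrA.
  by congr (_ *: _); field.
have t1 : K * Y = q^-1 *: (Y * K).
  rewrite hY mulrBr -scalerAr m1 m2 mulrBl -scalerAl scalerBr !scalerA.
  by rewrite mulrC.
have t2 : qc q^-1 (- (K * E1)) Y = K * (Y * E1 - E1 * Y).
  rewrite /qc mulNr mulrN scalerN opprK (mulrA Y K E1) scalerAl -t1.
  by rewrite mulrBr !mulrA addrC.
have t3 : E1 * Y - Y * E1 = Fb * (E1 * Fa - Fa * E1) - q^-1 *: ((E1 * Fa - Fa * E1) * Fb).
  rewrite hY !mulrBl !mulrBr -!scalerAl -!scalerAr.
  rewrite !mulrA hEF2 -(mulrA Fa E1 Fb) hEF2 !mulrA.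
  rewrite scalerBr. exact: swap4.
have t4 : Fb * ((q - q^-1)^-1 *: (K - Ki)) - q^-1 *: ((q - q^-1)^-1 *: (K - Ki) * Fb)
          = (- q^-1) *: (Fb * Ki).
  rewrite -scalerAl -scalerAr mulrBl mulrBr hKFb hKiFb !scalerBr !scalerA.
  rewrite (_ : q^-1 / (q - q^-1) * q = (q - q^-1)^-1); last by field; rewrite hq hq2.
  rewrite cancel5 -scalerBl.
  by congr (_ *: _); field; rewrite hq hq2.
rewrite t2 -opprB t3 hEF1 t4 scaleNr opprK -scalerAr mulrA hKFb -scalerAl -mulrA hKKi.
by rewrite mulr1 scalerA mulVf // scale1r.
Qed.

Fixpoint RR (F : fieldType) (A : algType F) (c : F) (g : nat -> A) (a len : nat) : A :=
  match len with 0 => g a | l.+1 => qc c (g a) (RR c g a.+1 l) end.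
Fixpoint SS (F : fieldType) (A : algType F) (c : F) (g : nat -> A) (a len : nat) : A :=
  match len with 0 => g a | l.+1 => qc c (SS c g a.+1 l) (g a) end.

Lemma RR_map (F : fieldType) (A : algType F) (c : F) (g : nat -> A) (phi : A -> A) s a len :
  (forall x y, phi (qc c x y) = qc c (phi x) (phi y)) ->
  (forall i, (a <= i <= a + len)%N -> phi (g i) = g (i + s)%N) ->
  phi (RR c g a len) = RR c g (a + s) len.
Proof.
move=> hphi; elim: len a => [|l IH] a hg /=.
  by rewrite hg // addn0 leqnn.
rewrite hphi hg; last by rewrite leqnn leq_addr.
rewrite IH -?addSn // => i /andP [h1 h2]; apply: hg.
by rewrite (ltnW h1) /= addnS -addSn.
Qed.

Lemma SS_map (F : fieldType) (A : algType F) (c : F) (g : nat -> A) (phi : A -> A) s a len :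
  (forall x y, phi (qc c x y) = qc c (phi x) (phi y)) ->
  (forall i, (a <= i <= a + len)%N -> phi (g i) = g (i + s)%N) ->
  phi (SS c g a len) = SS c g (a + s) len.
Proof.
move=> hphi; elim: len a => [|l IH] a hg /=.
  by rewrite hg // addn0 leqnn.
rewrite hphi hg; last by rewrite leqnn leq_addr.
rewrite IH -?addSn // => i /andP [h1 h2]; apply: hg.
by rewrite (ltnW h1) /= addnS -addSn.
Qed.

Lemma RR_comm (F : fieldType) (A : algType F) (c : F) (g : nat -> A) (x : A) a len :
  (forall i, (a <= i <= a + len)%N -> x * g i = g i * x) ->
  x * RR c g a len = RR c g a len * x.
Proof.
elim: len a => [|l IH] a hg /=.
  by rewrite hg // addn0 leqnn.
apply: qc_comm; first by rewrite hg // leqnn leq_addr.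
apply: IH => i /andP [h1 h2]; apply: hg.
by rewrite (ltnW h1) /= addnS -addSn.
Qed.

Lemma SS_comm (F : fieldType) (A : algType F) (c : F) (g : nat -> A) (x : A) a len :
  (forall i, (a <= i <= a + len)%N -> x * g i = g i * x) ->
  x * SS c g a len = SS c g a len * x.
Proof.
elim: len a => [|l IH] a hg /=.
  by rewrite hg // addn0 leqnn.
apply: qc_comm; last by rewrite hg // leqnn leq_addr.
apply: IH => i /andP [h1 h2]; apply: hg.
by rewrite (ltnW h1) /= addnS -addSn.
Qed.

Lemma RR_split (F : fieldType) (A : algType F) (c : F) (g : nat -> A) a l1 l2 :
  (forall i j, (a <= i)%N -> (i.+2 <= j)%N -> (j <= a + l1 + l2 + 1)%N -> g i * g j = g j * g i) ->
  RR c g a (l1 + l2 + 1) = qc c (RR c g a l1) (RR c g (a + l1 + 1) l2).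
Proof.
elim: l1 a => [|l1 IH] a hg.
  by rewrite add0n addn0 !addn1.
rewrite (_ : (l1.+1 + l2 + 1 = (l1 + l2 + 1).+1)%N); last by lia.
rewrite /= IH; last by move=> i j h1 h2 h3; apply: hg; lia.
rewrite qc_jacobi; first by rewrite (_ : (a.+1 + l1 + 1 = a + l1.+1 + 1)%N) //; lia.
apply: RR_comm => i hi; apply: hg; lia.
Qed.

Lemma SS_split (F : fieldType) (A : algType F) (c : F) (g : nat -> A) a l1 l2 :
  (forall i j, (a <= i)%N -> (i.+2 <= j)%N -> (j <= a + l1 + l2 + 1)%N -> g i * g j = g j * g i) ->
  SS c g a (l1 + l2 + 1) = qc c (SS c g (a + l1 + 1) l2) (SS c g a l1).
Proof.
elim: l1 a => [|l1 IH] a hg.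
  by rewrite add0n addn0 !addn1.
rewrite (_ : (l1.+1 + l2 + 1 = (l1 + l2 + 1).+1)%N); last by lia.
rewrite /= IH; last by move=> i j h1 h2 h3; apply: hg; lia.
rewrite qc_jacobi; first by rewrite (_ : (a.+1 + l1 + 1 = a + l1.+1 + 1)%N) //; lia.
symmetry; apply: SS_comm => i hi; apply: hg; lia.
Qed.

Lemma T_qc (F : fieldType) (A : algType F) (T : {lrmorphism A -> A}) (c : F) (x y : A) :
  T (qc c x y) = qc c (T x) (T y).
Proof. rewrite /qc rmorphB rmorphM; congr (_ - _). rewrite -rmorphM. exact: linearZ. Qed.

Lemma Tword_qc (F : fieldType) (A : algType F) (T : nat -> {lrmorphism A -> A}) w (c : F) (x y : A) :
  Tword T w (qc c x y) = qc c (Tword T w x) (Tword T w y).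
Proof. by elim: w => [|b w IH] //=; rewrite IH T_qc. Qed.

Lemma Tword_cat (F : fieldType) (A : algType F) (T : nat -> {lrmorphism A -> A}) w1 w2 (x : A) :
  Tword T (w1 ++ w2) x = Tword T w1 (Tword T w2 x).
Proof. by rewrite /Tword foldr_cat. Qed.

Lemma Tword_fix (F : fieldType) (A : algType F) (T : nat -> {lrmorphism A -> A}) w (x : A) :
  (forall b, b \in w -> T b x = x) -> Tword T w x = x.
Proof.
elim: w => [|b w IH] //= h.
rewrite IH; first by apply: h; rewrite inE eqxx.
by move=> b' hb; apply: h; rewrite inE hb orbT.
Qed.

Lemma cart1 (a : nat) : cartan a a = 2%:Z.
Proof. by rewrite /cartan eqxx. Qed.
Lemma cart2 (a : nat) : cartan a a.+1 = - 1%:Z.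
Proof. rewrite /cartan. have -> : (a == a.+1) = false by elim: a. by rewrite eqxx orbT. Qed.


Unset Implicit Arguments.

Theorem proposition3p1 (R : realType) (n : nat) (q : R[i])
    (hq0 : q != 0) (hq1 : q != 1) (hqm1 : q != -1)
    (A : algType R[i]) (e f k kinv : nat -> A) (T : nat -> {lrmorphism A -> A})
    (hrel : Uq_relations n q e f k kinv) (hT : Lusztig_T n q e f k kinv T) :
  (forall i, in_range n i ->
     Eroot n e f T i i.+1 = e i /\ Eroot n e f T i.+1 i = f i) /\
  (forall i k0 j, (1 <= i)%N -> (i < k0)%N -> (k0 < j)%N -> (j <= n)%N ->
     Eroot n e f T i j =
       Eroot n e f T i k0 * Eroot n e f T k0 j - q *: (Eroot n e f T k0 j * Eroot n e f T i k0)) /\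
  (forall i k0 j, (1 <= j)%N -> (j < k0)%N -> (k0 < i)%N -> (i <= n)%N ->
     Eroot n e f T i j =
       Eroot n e f T i k0 * Eroot n e f T k0 j - q^-1 *: (Eroot n e f T k0 j * Eroot n e f T i k0)).
Proof.
have hq2 : q * q - 1 != 0.
  rewrite (_ : q * q - 1 = (q - 1) * (q + 1)); last by ring.
  by rewrite mulf_neq0 // ?subr_eq0 // addr_eq0.
have inr : forall a, (1 <= a)%N -> (a <= n.-1)%N -> in_range n a.
  by move=> a h1 h2; rewrite /in_range h1 h2.
have ecomm : forall i j, in_range n i -> in_range n j -> distant i j -> e i * e j = e j * e i.
  by move=> i j hi hj hd; have [_ [_ _ _ _ H]] := hrel i j hi hj; case: (H hd).
have fcomm : forall i j, in_range n i -> in_range n j -> distant i j -> f i * f j = f j * f i.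
  by move=> i j hi hj hd; have [_ [_ _ _ _ H]] := hrel i j hi hj; case: (H hd).
have Tfix_e : forall b a, in_range n b -> in_range n a -> distant b a -> T b (e a) = e a.
  by move=> b a hb ha hd; have [_ _ H] := hT b a hb ha; case: (H hd).
have Tfix_f : forall b a, in_range n b -> in_range n a -> distant b a -> T b (f a) = f a.
  by move=> b a hb ha hd; have [_ _ H] := hT b a hb ha; case: (H hd).
have Tadj_e : forall b a, in_range n b -> in_range n a -> adjacent b a -> T b (e a) = qc q (e b) (e a).
  by move=> b a hb ha hd; have [_ H _] := hT b a hb ha; case: (H hd).
have Tadj_f : forall b a, in_range n b -> in_range n a -> adjacent b a -> T b (f a) = qc q^-1 (f a) (f b).
  by move=> b a hb ha hd; have [_ H _] := hT b a hb ha; case: (H hd).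
have adjS : forall a, adjacent a a.+1 by move=> a; rewrite /adjacent eqxx orbT.
have adjS' : forall a, adjacent a.+1 a by move=> a; rewrite /adjacent eqxx.
have stepE : forall a, (1 <= a)%N -> (a.+1 <= n.-1)%N -> T a (T a.+1 (e a)) = e a.+1.
  move=> a h1 h2.
  have ra : in_range n a by apply: inr; lia.
  have rb : in_range n a.+1 by apply: inr; lia.
  rewrite Tadj_e // T_qc.
  have [H1 _ _] := hT a a ra ra; have [H1e _ _] := H1 erefl.
  have [_ H2 _] := hT a a.+1 ra rb; have [H2e _ _] := H2 (adjS a).
  rewrite H1e H2e.
  have [[hKK hKiK _] [hke _ hef _ _]] := hrel a a ra ra.
  have [_ [hke2 _ _ _ _]] := hrel a a.+1 ra rb.
  have [_ [_ _ hef2 _ _]] := hrel a.+1 a rb ra.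
  rewrite cart1 in hke; rewrite cart2 -invr_expz expr1z in hke2.
  rewrite eqxx in hef.
  have nS : (a.+1 == a) = false by elim: a {h1 h2 ra rb H1 H2 H1e H2e hKK hKiK hke hef hke2 hef2}.
  rewrite nS in hef2.
  have [_ hKiE1] := conjK hKK hKiK hke (expf_neq0 2 hq0).
  have [hKE2 hKiE2] := conjK hKK hKiK hke2 (invr_neq0 hq0).
  rewrite invrK in hKiE2.
  apply: (@keyE _ _ q (e a) (e a.+1) (f a) (k a) (kinv a)) => //.
  by apply/eqP; rewrite -subr_eq0 hef2.
have stepF : forall a, (1 <= a)%N -> (a.+1 <= n.-1)%N -> T a (T a.+1 (f a)) = f a.+1.
  move=> a h1 h2.
  have ra : in_range n a by apply: inr; lia.
  have rb : in_range n a.+1 by apply: inr; lia.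
  rewrite Tadj_f // T_qc.
  have [H1 _ _] := hT a a ra ra; have [_ _ H1f] := H1 erefl.
  have [_ H2 _] := hT a a.+1 ra rb; have [_ _ H2f] := H2 (adjS a).
  rewrite H1f H2f.
  have [[hKK hKiK _] [_ hkf hef _ _]] := hrel a a ra ra.
  have [_ [_ hkf2 hef2 _ _]] := hrel a a.+1 ra rb.
  rewrite cart1 -invr_expz in hkf; rewrite cart2 opprK expr1z in hkf2.
  rewrite eqxx in hef.
  have nS : (a == a.+1) = false by elim: a {h1 h2 ra rb H1 H2 H1f H2f hKK hKiK hkf hef hkf2 hef2}.
  rewrite nS in hef2.
  have [hKFa _] := conjK hKK hKiK hkf (invr_neq0 (expf_neq0 2 hq0)).
  have [hKFb hKiFb] := conjK hKK hKiK hkf2 hq0.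
  apply: (@keyF _ _ q (e a) (f a) (f a.+1) (k a) (kinv a)) => //.
  by apply/eqP; rewrite -subr_eq0 hef2.
have Tcons : forall b w (x : A), Tword T (b :: w) x = T b (Tword T w x) by [].
have shiftE : forall m a, (1 <= a)%N -> (a < m)%N -> (m <= n.-1)%N ->
    Tword T (iota 1 m) (e a) = e a.+1.
  move=> m a h1 h2 h3.
  have -> : m = (a.-1 + (2 + (m - a.+1)))%N by lia.
  rewrite iotaD iotaD !Tword_cat.
  rewrite (_ : (1 + a.-1)%N = a); last by lia.
  rewrite (Tword_fix (w := iota (a + 2) _)); last first.
    move=> b; rewrite mem_iota => /andP [hb1 hb2].
    by apply: Tfix_e; [apply: inr; lia | apply: inr; lia | rewrite /distant; lia].
  rewrite (_ : iota a 2 = [:: a; a.+1]) // Tcons Tcons /= stepE //; last by lia.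
  rewrite Tword_fix // => b; rewrite mem_iota => /andP [hb1 hb2].
  by apply: Tfix_e; [apply: inr; lia | apply: inr; lia | rewrite /distant; lia].
have shiftF : forall m a, (1 <= a)%N -> (a < m)%N -> (m <= n.-1)%N ->
    Tword T (iota 1 m) (f a) = f a.+1.
  move=> m a h1 h2 h3.
  have -> : m = (a.-1 + (2 + (m - a.+1)))%N by lia.
  rewrite iotaD iotaD !Tword_cat.
  rewrite (_ : (1 + a.-1)%N = a); last by lia.
  rewrite (Tword_fix (w := iota (a + 2) _)); last first.
    move=> b; rewrite mem_iota => /andP [hb1 hb2].
    by apply: Tfix_f; [apply: inr; lia | apply: inr; lia | rewrite /distant; lia].
  rewrite (_ : iota a 2 = [:: a; a.+1]) // Tcons Tcons /= stepF //; last by lia.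
  rewrite Tword_fix // => b; rewrite mem_iota => /andP [hb1 hb2].
  by apply: Tfix_f; [apply: inr; lia | apply: inr; lia | rewrite /distant; lia].
have chainE : forall m b, (1 <= b)%N -> (b + m <= n.-1)%N ->
    Tword T (iota b m) (e (b + m)%N) = RR q e b m.
  elim=> [|m IH] b h1 h2; first by rewrite addn0.
  rewrite (_ : iota b m.+1 = b :: iota b.+1 m) // Tcons.
  rewrite (_ : (b + m.+1 = b.+1 + m)%N); last by lia.
  rewrite IH; [|lia|lia].
  case: m {IH} h2 => [|m] h2.
    by rewrite /= Tadj_e //; apply: inr; lia.
  rewrite [RR q e b.+1 m.+1]/= T_qc Tadj_e //; [|apply: inr; lia|apply: inr; lia].
  rewrite (RR_map (s := 0)); last first.
    move=> i hi; rewrite addn0; apply: Tfix_e; [apply: inr; lia|apply: inr; lia|rewrite /distant; lia].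
    exact: T_qc.
  rewrite addn0 qc_jacobi //.
  apply: RR_comm => i hi; apply: ecomm; [apply: inr; lia|apply: inr; lia|rewrite /distant; lia].
have chainF : forall m b, (1 <= b)%N -> (b + m <= n.-1)%N ->
    Tword T (iota b m) (f (b + m)%N) = SS q^-1 f b m.
  elim=> [|m IH] b h1 h2; first by rewrite addn0.
  rewrite (_ : iota b m.+1 = b :: iota b.+1 m) // Tcons.
  rewrite (_ : (b + m.+1 = b.+1 + m)%N); last by lia.
  rewrite IH; [|lia|lia].
  case: m {IH} h2 => [|m] h2.
    by rewrite /= Tadj_f //; apply: inr; lia.
  rewrite [SS q^-1 f b.+1 m.+1]/= T_qc Tadj_f //; [|apply: inr; lia|apply: inr; lia].
  rewrite (SS_map (s := 0)); last first.
    move=> i hi; rewrite addn0; apply: Tfix_f; [apply: inr; lia|apply: inr; lia|rewrite /distant; lia].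
    exact: T_qc.
  rewrite addn0.
  transitivity (qc q^-1 (qc q^-1 (SS q^-1 f b.+2 m) (f b.+1)) (f b)); last by [].
  rewrite qc_jacobi //; symmetry.
  apply: SS_comm => i hi; apply: fcomm; [apply: inr; lia|apply: inr; lia|rewrite /distant; lia].
have shiftR : forall m a len, (1 <= a)%N -> (a + len < m)%N -> (m <= n.-1)%N ->
    Tword T (iota 1 m) (RR q e a len) = RR q e a.+1 len.
  move=> m a len h1 h2 h3; rewrite -(addn1 a); apply: RR_map.
    by move=> x y; exact: Tword_qc.
  by move=> i hi; rewrite addn1; apply: shiftE; lia.
have shiftS : forall m a len, (1 <= a)%N -> (a + len < m)%N -> (m <= n.-1)%N ->
    Tword T (iota 1 m) (SS q^-1 f a len) = SS q^-1 f a.+1 len.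
  move=> m a len h1 h2 h3; rewrite -(addn1 a); apply: SS_map.
    by move=> x y; exact: Tword_qc.
  by move=> i hi; rewrite addn1; apply: shiftF; lia.
have bigR : forall p a len, (1 <= a)%N -> (a + p + len <= n.-1)%N ->
    Tword T (flatten [seq iota 1 (n - l) | l <- iota 1 p]) (RR q e a len) = RR q e (a + p) len.
  elim=> [|p IH] a len h1 h2; first by rewrite addn0.
  rewrite -(addn1 p) iotaD map_cat flatten_cat Tword_cat /= cats0.
  rewrite shiftR; [|lia|lia|lia].
  rewrite IH; [|lia|lia].
  by rewrite addSnnS addn1.
have bigS : forall p a len, (1 <= a)%N -> (a + p + len <= n.-1)%N ->
    Tword T (flatten [seq iota 1 (n - l) | l <- iota 1 p]) (SS q^-1 f a len) = SS q^-1 f (a + p) len.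
  elim=> [|p IH] a len h1 h2; first by rewrite addn0.
  rewrite -(addn1 p) iotaD map_cat flatten_cat Tword_cat /= cats0.
  rewrite shiftS; [|lia|lia|lia].
  rewrite IH; [|lia|lia].
  by rewrite addSnnS addn1.
have Eup : forall i j, (1 <= i)%N -> (i < j)%N -> (j <= n)%N -> Eroot n e f T i j = RR q e i (j - i - 1).
  move=> i j h1 h2 h3; rewrite /Eroot h2 /word_w Tword_cat.
  have -> : e (j - i)%N = e (1 + (j - i - 1))%N by congr e; lia.
  rewrite chainE; [|lia|lia].
  rewrite bigR; [|lia|lia].
  by congr (RR q e _ _); lia.
have Edown : forall i j, (1 <= j)%N -> (j < i)%N -> (i <= n)%N -> Eroot n e f T i j = SS q^-1 f j (i - j - 1).
  move=> i j h1 h2 h3; rewrite /Eroot.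
  rewrite (_ : (i < j)%N = false); last by lia.
  rewrite /word_w Tword_cat.
  have -> : f (i - j)%N = f (1 + (i - j - 1))%N by congr f; lia.
  rewrite chainF; [|lia|lia].
  rewrite bigS; [|lia|lia].
  by congr (SS q^-1 f _ _); lia.
split.
  move=> i /andP [h1 h2]; split.
    by rewrite Eup; [rewrite (_ : (i.+1 - i - 1 = 0)%N) //; lia | lia | lia | lia].
  by rewrite Edown; [rewrite (_ : (i.+1 - i - 1 = 0)%N) //; lia | lia | lia | lia].
split.
  move=> i k0 j h1 h2 h3 h4.
  rewrite (Eup i j) ?(Eup i k0) ?(Eup k0 j); try lia.
  rewrite (_ : (j - i - 1 = (k0 - i - 1) + (j - k0 - 1) + 1)%N); last by lia.
  rewrite RR_split; last first.
    move=> x y hx hxy hy; apply: ecomm; [apply: inr; lia|apply: inr; lia|rewrite /distant; lia].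
  by rewrite (_ : (i + (k0 - i - 1) + 1 = k0)%N) //; lia.
move=> i k0 j h1 h2 h3 h4.
rewrite (Edown i j) ?(Edown i k0) ?(Edown k0 j); try lia.
rewrite (_ : (i - j - 1 = (k0 - j - 1) + (i - k0 - 1) + 1)%N); last by lia.
rewrite SS_split; last first.
  move=> x y hx hxy hy; apply: fcomm; [apply: inr; lia|apply: inr; lia|rewrite /distant; lia].
by rewrite (_ : (j + (k0 - j - 1) + 1 = k0)%N) //; lia.
Qed.
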